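(* The step relation of algorithm BFS under the unfair daemon, $\mathrm{Step}=\mathrm{Step}^{(r)}\cup\mathrm{Step}^{(d)}\cup\mathrm{Step}^{(p)}$, is well-founded: from every initial configuration, every sequence of steps is finite (i.e. every execution reaches a terminal configuration, one in which no node is enabled).
   Context: Let $G$ be a finite, connected, undirected graph with node set $V$ and a distinguished node $r$ (the root). Each node $p$ has a fixed ordered list $N(p)$ of its neighbours. A configuration $\gamma$ assigns to each node $p$ a value $\gamma.p.d\in\mathbb N$ (unbounded) and a neighbour $\gamma.p.par\in N(p)$. For a non-root node $p$ let $Dist_p(\gamma)=\min\{\gamma.q.d+1 : q\in N(p)\}$. Algorithm BFS (Dolev et al.) has the following actions. Root: enabled iff $\gamma.r.d\neq 0$; executing it sets $r.d:=0$. Non-root $p$, action CD: enabled iff $\gamma.p.d\ne Dist_p(\gamma)$; executing sets $p.d:=Dist_p(\gamma)$. Non-root $p$, action CP: enabled iff $\gamma.p.d=Dist_p(\gamma)$ and $\gamma.q_0.d+1\neq\gamma.p.d$ where $q_0=\gamma.p.par$; executing sets $p.par$ to the first $q$ in $N(p)$ with $\gamma.q.d+1=\gamma.p.d$. A node is enabled if one of its actions is enabled. A step $\gamma\to\gamma'$ (relation $\mathrm{Step}$, unfair daemon) holds iff there is a nonempty set $S$ of nodes enabled in $\gamma$ such that $\gamma'$ is obtained by every $p\in S$ simultaneously executing its enabled action (evaluated in $\gamma$), all other nodes unchanged. $\mathrm{Step}^{(r)}$: steps with $\gamma.r.d\ne\gamma'.r.d$. $\mathrm{Step}^{(d)}$: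 steps with $\gamma.r.d=\gamma'.r.d$ and $\gamma.p.d\ne\gamma'.p.d$ for some $p$. $\mathrm{Step}^{(p)}$: steps with $\gamma.p.d=\gamma'.p.d$ for all $p$. A relation is well-founded if it admits no infinite forward chain. *)

(* Defs.v *)
From mathcomp Require Import all_boot.
Set Implicit Arguments. Unset Strict Implicit. Unset Printing Implicit Defensive.

Section BFS.
Variables (V : finType) (Nb : V -> seq V) (r : V).

Definition adj : rel V := fun p q => q \in Nb p.

Definition graph_ok : Prop :=
  [/\ forall p, uniq (Nb p),
      forall p q, adj p q = adj q p,
      forall p, ~~ adj p p
    & forall p q, connect adj p q].

Record config := Config { cd : V -> nat; cpar : V -> V }.

Definition valid (c : config) : Prop := forall p, cpar c p \in Nb p.

(* Dist_p(c) = min { d q + 1 | q in N(p) }  (N(p) nonempty for p != r). *)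
Definition Dist (c : config) (p : V) : nat :=
  match Nb p with
  | [::] => 0
  | q0 :: s => foldr (fun q m => minn (cd c q).+1 m) (cd c q0).+1 s
  end.

Definition root_enabled (c : config) : bool := cd c r != 0.
Definition CD_enabled (c : config) (p : V) : bool :=
  (p != r) && (cd c p != Dist c p).
Definition CP_enabled (c : config) (p : V) : bool :=
  [&& p != r, cd c p == Dist c p & (cd c (cpar c p)).+1 != cd c p].

Definition enabled (c : config) (p : V) : bool :=
  if p == r then root_enabled c else CD_enabled c p || CP_enabled c p.

Definition first_par (c : config) (p : V) : V :=
  nth p (Nb p) (find (fun q => (cd c q).+1 == cd c p) (Nb p)).

Definition exec (c : config) (p : V) : nat * V :=
  if p == r then (0, cpar c p)
  else if CD_enabled c p then (Dist c p, cpar c p)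
  else (cd c p, first_par c p).

Definition Step (c c' : config) : Prop :=
  exists S : {set V},
    [/\ S != set0,
        forall p, p \in S -> enabled c p
      & forall p, (cd c' p, cpar c' p) =
                  if p \in S then exec c p else (cd c p, cpar c p)].

Definition Step_r (c c' : config) : Prop := Step c c' /\ cd c r <> cd c' r.
Definition Step_d (c c' : config) : Prop :=
  Step c c' /\ cd c r = cd c' r /\ exists p, cd c p <> cd c' p.
Definition Step_p (c c' : config) : Prop :=
  Step c c' /\ forall p, cd c p = cd c' p.

(* Well-foundedness = no infinite forward chain (over valid configurations). *)
Definition no_infinite_chain (R : config -> config -> Prop) : Prop :=
  ~ exists f : nat -> config, valid (f 0) /\ forall n, R (f n) (f n.+1).

End BFS.

(* Main.v *)
Require Import Defs.
From mathcomp Require Import all_boot.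
From Stdlib Require Import Classical.
Set Implicit Arguments. Unset Strict Implicit. Unset Printing Implicit Defensive.

Lemma foldr_le (V : Type) (g : V -> nat) (s : seq V) b :
  foldr (fun q m => minn (g q).+1 m) b s <= b.
Proof. elim: s => //= q s IH; exact: leq_trans (geq_minr _ _) IH. Qed.

Lemma foldr_le_mem (V : eqType) (g : V -> nat) (s : seq V) b q :
  q \in s -> foldr (fun q m => minn (g q).+1 m) b s <= (g q).+1.
Proof.
elim: s => //= x s IH; rewrite in_cons => /orP [/eqP -> | H].
  exact: geq_minl.
exact: leq_trans (geq_minr _ _) (IH H).
Qed.

Lemma foldr_eq (V : eqType) (g : V -> nat) (s : seq V) b :
  foldr (fun q m => minn (g q).+1 m) b s = b \/
  exists2 q, q \in s & foldr (fun q m => minn (g q).+1 m) b s = (g q).+1.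
Proof.
elim: s => [|x s IH] /=; first by left.
rewrite /minn; case: ifP => _.
  by right; exists x => //; rewrite mem_head.
case: IH => [->|[q Hq ->]]; [left|right] => //.
by exists q => //; rewrite in_cons Hq orbT.
Qed.

Lemma Dist_le (V : finType) (Nb : V -> seq V) c p q :
  q \in Nb p -> Dist Nb c p <= (cd c q).+1.
Proof.
rewrite /Dist; case: (Nb p) => //= q0 s; rewrite in_cons => /orP [/eqP ->|H].
  exact: foldr_le.
exact: foldr_le_mem.
Qed.

Lemma Dist_ex (V : finType) (Nb : V -> seq V) c p :
  Nb p != [::] -> exists2 q, q \in Nb p & Dist Nb c p = (cd c q).+1.
Proof.
rewrite /Dist; case: (Nb p) => //= q0 s _.
case: (foldr_eq (fun q => cd c q) s (cd c q0).+1) => [->|[q Hq ->]].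
  by exists q0; rewrite ?mem_head.
by exists q; rewrite // in_cons Hq orbT.
Qed.

Lemma Dist_ext (V : finType) (Nb : V -> seq V) c c' p :
  (forall q, cd c q = cd c' q) -> Dist Nb c p = Dist Nb c' p.
Proof.
move=> H; rewrite /Dist; case: (Nb p) => // q0 s; rewrite H.
by elim: s => //= x s ->; rewrite H.
Qed.

Lemma nb_ne (V : finType) (Nb : V -> seq V) r p :
  graph_ok Nb -> p != r -> Nb p != [::].
Proof.
case=> _ _ _ Hc Hpr; move: (Hc p r) => /connectP [s Hs Hl].
case: s Hs Hl => [|q s] /=; first by move=> _ E; rewrite E eqxx in Hpr.
by case/andP; rewrite /adj; case: (Nb p).
Qed.

Lemma step_cd (V : finType) (Nb : V -> seq V) r c c' p :
  Step Nb r c c' -> cd c' p != cd c p ->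
  if p == r then cd c' p = 0 else cd c' p = Dist Nb c p.
Proof.
case=> S [_ Hen Hex]; move: (congr1 fst (Hex p)) => /= ->.
case: ifP => Hp; last by rewrite eqxx.
rewrite /exec; case: (p =P r) => //= _.
by case: ifP => // _; rewrite eqxx.
Qed.

Lemma step_root (V : finType) (Nb : V -> seq V) r c c' :
  Step Nb r c c' -> cd c r = 0 -> cd c' r = 0.
Proof.
move=> Hs H0; case: (cd c' r =P cd c r) => [->//|/eqP Hn].
by move: (step_cd Hs Hn); rewrite eqxx.
Qed.

Lemma step_dist (V : finType) (Nb : V -> seq V) r c c' p :
  Step Nb r c c' -> p != r -> cd c' p != cd c p -> cd c' p = Dist Nb c p.
Proof. by move=> Hs Hp Hn; move: (step_cd Hs Hn); rewrite (negbTE Hp). Qed.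

Lemma ivt (h : nat -> bool) i j :
  i <= j -> h i -> ~~ h j -> exists s, [/\ i <= s < j, h s & ~~ h s.+1].
Proof.
move=> Hij; rewrite -(subnKC Hij); elim: (j - i) => [|k IH].
  by rewrite addn0 => ->.
move=> Hi Hk; case Hm: (h (i + k)).
  exists (i + k); split => //; first by rewrite leq_addr addnS ltnSn.
  by rewrite -addnS.
have [s [/andP [H1 H2] H3 H4]] := IH Hi (negbT Hm).
by exists s; split => //; rewrite H1 addnS ltnS ltnW.
Qed.

Lemma persist (g : nat -> nat) m i j :
  (forall u, i <= u < j -> g u = m -> g u.+1 = m) -> i <= j -> g i = m -> g j = m.
Proof.
move=> Hs Hij Hi; case: (g j =P m) => // /eqP Hn.
have [s [/andP [H1 H2] H3 H4]] := ivt (h := fun u => g u == m) Hij (introT eqP Hi) Hn.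
by move: H4; rewrite (Hs s) ?H1 ?H2 ?eqxx //; apply/eqP.
Qed.

Lemma cp_dec (V : finType) (Nb : V -> seq V) r c c' :
  graph_ok Nb -> Step Nb r c c' -> (forall q, cd c' q = cd c q) ->
  #|[set p | CP_enabled Nb r c' p]| < #|[set p | CP_enabled Nb r c p]|.
Proof.
move=> Hg Hs Heq; have HD p : Dist Nb c' p = Dist Nb c p by apply: Dist_ext.
case: Hs => S [/set0Pn [p0 Hp0] Hen Hex].
have inS p : p \in S -> CP_enabled Nb r c p && ~~ CP_enabled Nb r c' p.
  move=> HpS; move: (Hen p HpS) (Hex p); rewrite HpS /enabled /exec.
  case: (p =P r) => [->|/eqP Hpr].
    by rewrite /root_enabled => /negbTE H [E _]; move: (Heq r); rewrite E => E'; rewrite -E' eqxx in H.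
  case: ifP => HCD /=.
    by move=> _ [E _]; move: (Heq p) HCD; rewrite E /CD_enabled => <-; rewrite eqxx andbF.
  move=> HCP [E1 E2]; rewrite HCP /CP_enabled Hpr HD E2 /=.
  move: HCP; rewrite /CP_enabled Hpr /= => /andP [/eqP Hd _].
  rewrite !Heq Hd eqxx /= negbK; apply/eqP.
  have [q Hq Hq'] := Dist_ex c (nb_ne Hg Hpr).
  have Hh : has (fun q => (cd c q).+1 == cd c p) (Nb p).
    by apply/hasP; exists q => //; rewrite Hd Hq'.
  by move: (nth_find p Hh) => /eqP; rewrite /first_par Hd.
apply: proper_card; apply/properP; split.
  apply/subsetP => p; rewrite !inE => Hp.
  case HpS: (p \in S); first by move: (inS p HpS) => /andP [_ /negP].
  move: (Hex p) Hp; rewrite HpS => -[E1 E2].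
  by rewrite /CP_enabled HD E2 !Heq.
by exists p0; rewrite !inE; case/andP: (inS p0 Hp0).
Qed.

Lemma inf_changes (V : finType) (Nb : V -> seq V) r (f : nat -> config V) :
  graph_ok Nb -> (forall n, Step Nb r (f n) (f n.+1)) ->
  forall N, exists n, N <= n /\ [exists p, cd (f n.+1) p != cd (f n) p].
Proof.
move=> Hg Hs N; apply: NNPP => Hno.
have Hc n : N <= n -> forall q, cd (f n.+1) q = cd (f n) q.
  move=> Hn q; apply/eqP; apply: contraT => Hq; case: Hno; exists n; split=> //.
  by apply/existsP; exists q.
pose mu n := #|[set p | CP_enabled Nb r (f n) p]|.
have Hk k : mu (N + k) + k <= mu N.
  elim: k => [|k IH]; first by rewrite addn0 addn0.
  have := cp_dec Hg (Hs (N + k)) (Hc _ (leq_addr _ _)).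
  rewrite -/(mu _) -/(mu _) -addnS => H.
  by rewrite addnS; apply: leq_trans IH; rewrite ltn_add2r.
by move: (Hk (mu N).+1); rewrite addnS ltnNge leq_addl.
Qed.

Definition binv (V : finType) (Nb : V -> seq V) r M (c : config V) :=
  forall p s, path (adj Nb) p s -> last p s = r -> cd c p <= M + size s.

Lemma binv_step (V : finType) (Nb : V -> seq V) r M c c' :
  Step Nb r c c' -> binv Nb r M c -> binv Nb r M c'.
Proof.
move=> Hs Hi p s Hp Hl.
case: (cd c' p =P cd c p) => [->|/eqP Hn]; first exact: Hi.
move: (step_cd Hs Hn); case: (p =P r) => [_ ->//|/eqP Hpr ->].
case: s Hp Hl => [|q s] /=; first by move=> _ E; rewrite E eqxx in Hpr.
case/andP => Hq Hp Hl.
apply: leq_trans (Dist_le c Hq) _; rewrite addnS ltnS; exact: Hi q s Hp Hl.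
Qed.

Lemma bound (V : finType) (Nb : V -> seq V) r (f : nat -> config V) :
  graph_ok Nb -> (forall n, Step Nb r (f n) (f n.+1)) ->
  forall n p, cd (f n) p <= \max_q cd (f 0) q + #|V|.
Proof.
move=> Hg Hs; set M := \max_q _.
have Hb n : binv Nb r M (f n).
  elim: n => [|n IH]; last exact: binv_step (Hs n) IH.
  by move=> p s _ _; apply: leq_trans (leq_addr _ _); apply: leq_bigmax.
move=> n p; case: Hg => _ _ _ /(_ p r) /connectP [s Hp Hl].
case: (shortenP Hp) Hl => s' Hp' Hu _ Hl.
apply: leq_trans (Hb n p s' Hp' (esym Hl)) _; rewrite leq_add2l.
move: Hu => /card_uniqP /= E; apply: ltnW; rewrite -ltnS -E; exact: max_card.
Qed.

Lemma cycle_false (V : finType) (Nb : V -> seq V) r (f : nat -> config V) a b :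
  graph_ok Nb -> (forall n, Step Nb r (f n) (f n.+1)) -> a < b ->
  (forall p, cd (f a) p = cd (f b) p) ->
  [exists p, cd (f a.+1) p != cd (f a) p] -> False.
Proof.
move=> Hg Hs Hab Hcyc /existsP [p0 Hp0].
set d := fun n p => cd (f n) p.
pose P v := [exists u : 'I_b, (a <= u) && [exists p,
   (d u.+1 p != d u p) && ((d u p == v) || (d u.+1 p == v))]].
have exP : exists v, P v.
  exists (d a p0); apply/existsP; exists (Ordinal Hab); rewrite /= leqnn /=.
  by apply/existsP; exists p0; rewrite Hp0 eqxx.
case: (ex_minnP exP) => m Pm Hmin.
have Hm u p : a <= u < b -> d u.+1 p != d u p -> m <= d u p /\ m <= d u.+1 p.
  case/andP => H1 H2 Hc; split; apply: Hmin; apply/existsP; exists (Ordinal H2);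
  rewrite /= H1 /=; apply/existsP; exists p; by rewrite Hc eqxx ?orbT.
have [s [p [/andP [Hs1 Hs2] Hsn Hsm]]] : exists s p,
    [/\ a <= s < b, d s p != m & d s.+1 p = m].
  move: Pm => /existsP [[u Hu] /= /andP [Hau /existsP [p /andP [Hc Hv]]]].
  case Hu1: (d u.+1 p == m).
    exists u, p; split; rewrite ?Hau ?(eqP Hu1) //.
    by move: Hc; rewrite (eqP Hu1) eq_sym.
  move: Hv; rewrite Hu1 orbF => /eqP Hu0.
  case Ha: (d a p == m).
    have Hub : u.+1 <= b by [].
    have := ivt (h := fun x => d x p != m) Hub; rewrite Hu1 /= -/(d b p).
    rewrite /d -Hcyc -/(d a p) Ha => /(_ isT isT) [s [/andP [H1 H2] H3 H4]].
    exists s, p; split => //; last by apply/eqP; rewrite -(negbK (_ == _)).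
    by rewrite H2 andbT; apply: leq_trans Hau (ltnW H1).
  have := ivt (h := fun x => d x p != m) Hau; rewrite Ha Hu0 eqxx /=.
  move=> /(_ isT isT) [s [/andP [H1 H2] H3 H4]].
  exists s, p; split => //; last by apply/eqP; rewrite -(negbK (_ == _)).
  by rewrite H1 (ltn_trans H2 Hu).
have final : (forall u, a <= u < b -> d u p = m -> d u.+1 p = m) -> False.
  move=> Hst.
  have Hb : d b p = m.
    apply: (persist (g := fun n => d n p) (i := s.+1) _ Hs2 Hsm) => u /andP [H1 H2].
    by apply: Hst; rewrite H2 andbT (leq_trans Hs1) // ltnW.
  have Ha : d a p = m by rewrite /d Hcyc.
  have := persist (j := s) (g := fun n => d n p) _ Hs1 Ha.
  move=> H; rewrite H ?eqxx // in Hsn.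
  move=> u /andP [H1 H2]; apply: Hst; rewrite H1 (ltn_trans H2 Hs2) //.
have Hchg : d s.+1 p != d s p by rewrite Hsm eq_sym.
case: (p =P r) => [Epr|/eqP Hpr].
  subst p; have Hm0 : m = 0 by move: (step_cd (Hs s) Hchg); rewrite eqxx -/(d s.+1 r) Hsm.
  apply: final => u _; rewrite Hm0; exact: step_root (Hs u).
have HD : Dist Nb (f s) p = m by rewrite -Hsm; symmetry; exact: step_dist (Hs s) Hpr Hchg.
have [q Hq Hqd] := Dist_ex (f s) (nb_ne Hg Hpr).
have Hqm : d s q < m by rewrite -HD Hqd.
have Hqc u : a <= u <= b -> d u q = d s q.
  case/andP => Hu1 Hu2; apply/eqP; apply: contraT => Hne.
  case: (leqP s u) => Hsu.
    have := ivt (h := fun x => d x q == d s q) Hsu; rewrite eqxx Hne.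
    move=> /(_ isT isT) [t [/andP [H1 H2] /eqP H3 H4]].
    have Ht : a <= t < b by rewrite (leq_trans Hs1 H1) (leq_trans H2 Hu2).
    have H6 : d t.+1 q != d t q by rewrite H3.
    have [H5 _] := Hm t q Ht H6.
    by move: H5; rewrite H3 leqNgt Hqm.
  have := ivt (h := fun x => d x q != d s q) (ltnW Hsu); rewrite eqxx Hne.
  move=> /(_ isT isT) [t [/andP [H1 H2] H3 /negbNE /eqP H4]].
  have Ht : a <= t < b by rewrite (leq_trans Hu1 H1) (ltn_trans H2 Hs2).
  have H6 : d t.+1 q != d t q by rewrite H4 eq_sym.
  have [_ H5] := Hm t q Ht H6.
  by move: H5; rewrite H4 leqNgt Hqm.
apply: final => u /andP [H1 H2] Hu; apply/eqP; apply: contraT => Hne.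
have Hc : d u.+1 p != d u p by rewrite Hu.
have [_ H5] := Hm u p (introT andP (conj H1 H2)) Hc; move: H5.
rewrite /d (step_dist (Hs u) Hpr Hc) => Hle.
have Hqm2 : (d s q).+1 = m by rewrite -HD Hqd.
have := Dist_le (f u) Hq; rewrite -/(d u q) Hqc ?H1 ?(ltnW H2) // Hqm2 => Hle2.
by move: Hne; rewrite /d (step_dist (Hs u) Hpr Hc) eqn_leq Hle Hle2.
Qed.

Theorem theorem1 (V : finType) (Nb : V -> seq V) (r : V) :
  graph_ok Nb ->
  no_infinite_chain Nb
    (fun c c' => Step_r Nb r c c' \/ Step_d Nb r c c' \/ Step_p Nb r c c').
Proof.
move=> Hg [f [_ Hf]].
have Hs n : Step Nb r (f n) (f n.+1) by case: (Hf n) => [[]|[[]|[]]].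
have HA := inf_changes Hg Hs.
pose P N n := (N <= n) && [exists p, cd (f n.+1) p != cd (f n) p].
have exP N : exists n, P N n.
  by have [n [H1 H2]] := HA N; exists n; rewrite /P H1.
pose next N := ex_minn (exP N).
have Hnext N : N <= next N /\ [exists p, cd (f (next N).+1) p != cd (f (next N)) p].
  by rewrite /next; case: ex_minnP => n /andP [H1 H2] _.
pose T := fix T k := if k is k'.+1 then next (T k').+1 else next 0.
have Tinc k1 k2 : k1 < k2 -> T k1 < T k2.
  elim: k2 => // k2 IH; rewrite ltnS leq_eqVlt => /orP [/eqP ->|H].
    by case: (Hnext (T k2).+1).
  by apply: ltn_trans (IH H) _; case: (Hnext (T k2).+1).
have HT k : [exists p, cd (f (T k).+1) p != cd (f (T k)) p].
  by case: k => [|k]; [exact: (Hnext 0).2 | exact: (Hnext (T k).+1).2].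
set B := \max_q cd (f 0) q + #|V|.
have Hb n p : cd (f n) p < B.+1 by rewrite ltnS; exact: bound Hg Hs n p.
pose K := #|{ffun V -> 'I_B.+1}|.+1.
pose g (k : 'I_K) : {ffun V -> 'I_B.+1} := [ffun p => inord (cd (f (T k)) p)].
have : ~~ injectiveb g.
  apply/negP => /injectiveP Hi; have := leq_card g Hi.
  by rewrite card_ord ltnn.
move=> /injectivePn [x [y Hxy Hg']].
have Heq p : cd (f (T x)) p = cd (f (T y)) p.
  move: (congr1 (fun h : {ffun V -> 'I_B.+1} => nat_of_ord (h p)) Hg') => /=; rewrite !ffunE !inordK //.
have Hc (a b : nat) : a < b -> (forall p, cd (f (T a)) p = cd (f (T b)) p) -> False.
  by move=> Hab He; exact: cycle_false Hg Hs (Tinc _ _ Hab) He (HT a).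
case: (ltngtP (nat_of_ord x) (nat_of_ord y)) => H.
- exact: Hc H Heq.
- by apply: (Hc _ _ H) => p; rewrite Heq.
- by move: Hxy; rewrite (val_inj H) eqxx.
Qed.
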